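(* Let $X$ be a uniform space equipped with a uniformly continuous and expansive action of a group $\Gamma$, and let $f \colon X \to X$ be a uniformly continuous and $\Gamma$-equivariant map. Let $Y$ be a compact subset of $X$. Suppose that there exists a net $(Z_i)_{i \in I}$ of $\Gamma$-invariant subsets of $X$ which converges to $Y$ in the Hausdorff-Bourbaki topology on $\mathcal{P}(X)$, such that for every $i \in I$ one has $f(Z_i) \subset Z_i$ and the restriction map $f\vert_{Z_i} \colon Z_i \to Z_i$ is surjunctive. Then $Y$ is $\Gamma$-invariant, $f(Y) \subset Y$, and the restriction map $f\vert_Y \colon Y \to Y$ is surjunctive.
   Context: A map $g \colon S \to S$ from a set to itself is surjunctive if it is surjective or not injective. For a binary relation $V \subset X \times X$ and $A \subset X$, $V[A] = \{x \in X : (x,a) \in V \text{ for some } a \in A\}$. An action of $\Gamma$ on a uniform space $X$ is uniformly continuous if each map $x \mapsto \gamma x$ is uniformly continuous; it is expansive if there is an entourage $W_0$ of $X$ such that for any two distinct $x,y \in X$ there is $\gamma \in \Gamma$ with $(\gamma x,\gamma y) \notin W_0$. The Hausdorff-Bourbaki uniform structure on the set $\mathcal{P}(X)$ of all subsets of $X$ is the uniform structure having as a base the sets $\widehat{V} = \{(A,B) \in \mathcal{P}(X)\times\mathcal{P}(X) : B \subset V[A] \text{ and } A \subset V[B]\}$, $V$ an entourage of $X$; the Hausdorff-Bourbaki topology is its associated topology. *)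

(* Defs.v *)
From HB Require Import structures.
From mathcomp Require Import all_boot all_classical all_reals topology.
Set Implicit Arguments. Unset Strict Implicit. Unset Printing Implicit Defensive.
Local Open Scope classical_set_scope.

Definition is_group (G : Type) (mul : G -> G -> G) (one : G) (inv : G -> G) :=
  [/\ forall a b c, mul a (mul b c) = mul (mul a b) c,
      forall a, mul one a = a, forall a, mul a one = a,
      forall a, mul (inv a) a = one & forall a, mul a (inv a) = one].

Definition is_action (G X : Type) (mul : G -> G -> G) (one : G)
  (act : G -> X -> X) :=
  (forall x, act one x = x) /\ (forall g h x, act (mul g h) x = act g (act h x)).

Definition rel_image (X : Type) (V : set (X * X)) (A : set X) : set X :=
  [set x | exists2 a, A a & V (x, a)].

Definition hb_entourage (X : Type) (V : set (X * X)) : set (set X * set X) :=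
  [set AB | AB.2 `<=` rel_image V AB.1 /\ AB.1 `<=` rel_image V AB.2].

Definition directed_set (I : Type) (le : I -> I -> Prop) :=
  [/\ inhabited I, (forall i, le i i), (forall i j k, le i j -> le j k -> le i k)
    & forall i j, exists k, le i k /\ le j k].

(* The net Z converges to Y in the Hausdorff-Bourbaki topology on P(X):
   every basic neighbourhood {B | (Y,B) in \hat V} of Y eventually contains Z i. *)
Definition hb_net_converges (X : uniformType) (I : Type) (le : I -> I -> Prop)
  (Z : I -> set X) (Y : set X) :=
  forall V, entourage V ->
    exists i0, forall i, le i0 i -> hb_entourage V (Y, Z i).

Definition uc_action (G : Type) (X : uniformType) (act : G -> X -> X) :=
  forall g, unif_continuous (act g).

Definition expansive_action (G : Type) (X : uniformType) (act : G -> X -> X) :=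
  exists2 W0, entourage W0 &
    forall x y : X, x <> y -> exists g, ~ W0 (act g x, act g y).

Definition equivariant (G X : Type) (act : G -> X -> X) (f : X -> X) :=
  forall g x, f (act g x) = act g (f x).

Definition gamma_invariant (G X : Type) (act : G -> X -> X) (Z : set X) :=
  forall g x, Z x -> Z (act g x).

Definition maps_into (X : Type) (f : X -> X) (Z : set X) := forall x, Z x -> Z (f x).

Definition surjunctive_on (X : Type) (f : X -> X) (Z : set X) :=
  (forall z, Z z -> exists2 w, Z w & f w = z) \/
  ~ (forall a b, Z a -> Z b -> f a = f b -> a = b).

(* Main.v *)
Require Import Defs.
From HB Require Import structures.
From mathcomp Require Import all_boot all_classical all_reals topology.
Local Open Scope classical_set_scope.

Lemma ucP {U V : uniformType} {h : U -> V} {E : set (V * V)} :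
  unif_continuous h -> entourage E ->
  exists2 D, entourage D & forall a b, D (a, b) -> E (h a, h b).
Proof.
move=> hu entE; exists ((fun xy => (h xy.1, h xy.2)) @^-1` E).
  exact: hu.
by move=> a b.
Qed.

Lemma nbhs_ent (X : uniformType) (x : X) (B : set X) :
  nbhs x B -> exists2 E, entourage E & forall y, E (x, y) -> B y.
Proof.
move=> /nbhsP [E entE sEB]; exists E => // y Exy; apply: sEB.
by apply/xsectionP.
Qed.

Lemma ent_nbhs {X : uniformType} (x : X) {E : set (X * X)} :
  entourage E -> nbhs x [set y | E (x, y)].
Proof.
move=> entE; apply/nbhsP; exists E => // y /xsectionP.
by [].
Qed.

Lemma closure_ent (X : uniformType) (A : set X) x :
  (forall E, entourage E -> exists2 a, A a & E (x, a)) -> closure A x.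
Proof.
move=> H B /nbhs_ent [E entE sEB].
by have [a Aa Ea] := H E entE; exists a; split => //; apply: sEB.
Qed.

Lemma ent_eq (X : uniformType) (p q : X) : hausdorff_space X ->
  (forall A, entourage A -> A (p, q)) -> p = q.
Proof. by move=> h c; apply: h; rewrite -closeEnbhs entourage_close. Qed.

Lemma cluster_fam (T : topologicalType) (M : uniformType) (K : set T)
  (S : set (M * M) -> set T) :
  compact K -> (forall E, S E `<=` K) ->
  (forall E E', E `<=` E' -> S E `<=` S E') ->
  (forall E, entourage E -> S E !=set0) ->
  exists2 p, K p & forall E A, entourage E -> nbhs p A -> S E `&` A !=set0.
Proof.
move=> cK SK Smono Sne.
have FF : Filter (filter_from entourage S).
  apply: filter_from_filter; first by exists setT; exact: entourageT.
  move=> i j ei ej; exists (i `&` j); first exact: filterI.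
  by move=> x Sx; split; apply: (Smono _ _ _ x Sx) => ? [].
have PF : ProperFilter (filter_from entourage S).
  exact: filter_from_proper.
have [p [Kp clp]] : K `&` cluster (filter_from entourage S) !=set0.
  apply: cK; exists setT; first exact: entourageT.
  exact: SK.
exists p => // E A entE nA.
by apply: clp => //; exists E.
Qed.

Theorem theorem1p1 (G : Type) (mul : G -> G -> G) (one : G) (inv : G -> G)
  (X : uniformType) (act : G -> X -> X) (f : X -> X) (Y : set X)
  (I : Type) (le : I -> I -> Prop) (Z : I -> set X) :
  is_group mul one inv ->
  is_action mul one act ->
  uc_action act ->
  expansive_action act ->
  unif_continuous f ->
  equivariant act f ->
  compact Y ->
  directed_set le ->
  (forall i, gamma_invariant act (Z i)) ->
  hb_net_converges le Z Y ->
  (forall i, maps_into f (Z i)) ->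
  (forall i, surjunctive_on f (Z i)) ->
  [/\ gamma_invariant act Y, maps_into f Y & surjunctive_on f Y].
Proof.
move=> _ _ ucact [W0 entW0 expW0] ucf eqf cY [_ lerefl _ _] Zinv conv Zf Zsj.
have hX : hausdorff_space X.
  move=> p q cl; apply: contrapT => npq.
  have [g ng] := expW0 _ _ npq.
  have [D entD HD] := ucP (ucact g) entW0.
  apply: ng; apply: HD.
  by move: cl; rewrite -closeEnbhs entourage_close; apply.
have clY : closed Y by exact: compact_closed.
have hbn : forall E, entourage E -> exists i,
    (forall z, Z i z -> exists2 y, Y y & E (z, y)) /\
    (forall y, Y y -> exists2 z, Z i z & E (y, z)).
  move=> E entE; have [i0 Hi0] := conv E entE.
  by exists i0; have [H1 H2] := Hi0 i0 (lerefl i0); split; [exact: H1|exact: H2].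
have stabY : forall h : X -> X, unif_continuous h ->
    (forall i z, Z i z -> Z i (h z)) -> forall y, Y y -> Y (h y).
  move=> h uch hZ y Yy; apply: clY; apply: closure_ent => E entE.
  have entE1 := entourage_split_ent entE.
  have [D entD HD] := ucP uch entE1.
  have [i [H1 H2]] := hbn _ (filterI entD entE1).
  have [z Zz [Dyz _]] := H2 _ Yy.
  have [y' Yy' [_ E1]] := H1 _ (hZ _ _ Zz).
  exists y' => //; exact: (entourage_split (h z) entE (HD _ _ Dyz) E1).
split.
- by move=> g y Yy; apply: (stabY _ (ucact g)) => // i z Zz; apply: Zinv.
- by move=> y Yy; apply: (stabY _ ucf) => // i z Zz; apply: Zf.
have [Hinj|nInj] := pselect (forall a b, Y a -> Y b -> f a = f b -> a = b);
  last by right.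
left.
have uinj : forall W, entourage W -> exists2 U, entourage U &
    forall a b, Y a -> Y b -> U (f a, f b) -> W (a, b).
  move=> W entW; apply: contrapT => nU.
  pose S := fun U : set (X * X) =>
    [set ab : X * X | Y ab.1 /\ Y ab.2 /\ U (f ab.1, f ab.2) /\ ~ W ab].
  have Sne : forall U, entourage U -> S U !=set0.
    move=> U entU; apply: contrapT => hne; apply: nU; exists U => // a b Ya Yb Uab.
    by apply: contrapT => nW; apply: hne; exists (a, b).
  have [[p q] [Yp Yq] clpq] := @cluster_fam _ X (Y `*` Y) S
      (compact_setX cY cY) (fun E ab Sab => conj Sab.1 Sab.2.1)
      (fun E E' sE ab Sab => conj Sab.1 (conj Sab.2.1
         (conj (sE _ Sab.2.2.1) Sab.2.2.2))) Sne.
  have fpq : f p = f q.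
    apply: ent_eq => // A entA.
    have entA1 := entourage_split_ent entA.
    have entA2 := entourage_split_ent entA1.
    have [D entD HD] := ucP ucf entA2.
    have nb : nbhs (p, q) ([set x | D (p, x)] `*` [set x | D (x, q)]).
      exists ([set x | D (p, x)], [set x | D (x, q)]); last by [].
      split; first exact: ent_nbhs.
      have := ent_nbhs q (entourage_inv entD); by apply: filterS => x.
    have [[a b] [[Ya [Yb [A2ab _]]] [Dpa Dbq]]] := clpq _ _ entA2 nb.
    apply: (entourage_split (f b) entA).
      exact: (entourage_split (f a) entA1 (HD _ _ Dpa) A2ab).
    by apply: (split_ent_subset entA1); exact: HD.
  have epq : p = q := Hinj _ _ Yp Yq fpq.
  rewrite -epq in clpq.
  have entW1 := entourage_split_ent entW.
  have nb2 : nbhs (p, p) ([set x | split_ent W (x, p)] `*` [set x | split_ent W (p, x)]).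
    exists ([set x | split_ent W (x, p)], [set x | split_ent W (p, x)]); last by [].
    split; last exact: ent_nbhs.
    have := ent_nbhs p (entourage_inv entW1); by apply: filterS => x.
  have [[a b] [[_ [_ [_ nWab]]] [W1ap W1pb]]] := clpq _ _ entourageT nb2.
  by apply: nWab; exact: (entourage_split p entW W1ap W1pb).
have entW1 := entourage_split_ent entW0.
have entW2 := entourage_split_ent entW1.
have [U entU HU] := uinj _ entW2.
have [D entD HD] := ucP ucf (entourage_split_ent entU).
pose V := [set xy : X * X | split_ent (split_ent W0) xy /\ split_ent W0 (xy.2, xy.1)
   /\ D xy /\ D (xy.2, xy.1)].
have entV : entourage V.
  apply: filterS (filterI (filterI entW2 (entourage_inv entW1))
     (filterI entD (entourage_inv entD))).
  by move=> [x y] /= [[? ?] [? ?]].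
have finj : forall i, (forall z, Z i z -> exists2 y, Y y & V (z, y)) ->
    forall a b, Z i a -> Z i b -> f a = f b -> a = b.
  move=> i H1 a b Za Zb fab; apply: contrapT => nab.
  have [g ng] := expW0 _ _ nab; apply: ng.
  have [y1 Y1 [W2a [_ [_ D1a]]]] := H1 _ (Zinv i g a Za).
  have [y2 Y2 [_ [W1b [D2b _]]]] := H1 _ (Zinv i g b Zb).
  have fg : f (act g a) = f (act g b) by rewrite !eqf fab.
  have Uy : U (f y1, f y2).
    apply: (entourage_split (f (act g a)) entU (HD _ _ D1a)).
    by rewrite fg; exact: HD.
  have W2y := HU _ _ Y1 Y2 Uy.
  apply: (entourage_split y2 entW0 _ W1b).
  exact: (entourage_split y1 entW1 W2a W2y).
have surjZ : forall i, (forall z, Z i z -> exists2 y, Y y & V (z, y)) ->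
    forall z, Z i z -> exists2 w, Z i w & f w = z.
  move=> i H z Zz; case: (Zsj i) => [S|nI]; first exact: S.
  by exfalso; apply: nI; exact: finj.
move=> y Yy.
pose S := fun E : set (X * X) => [set w | Y w /\ E (f w, y)].
have Sne : forall E, entourage E -> S E !=set0.
  move=> E entE.
  have entE1 := entourage_split_ent entE.
  have [D' entD' HD'] := ucP ucf entE1.
  have entF : entourage [set xy : X * X | V xy /\ split_ent E (xy.2, xy.1)
      /\ D' (xy.2, xy.1)].
    apply: filterS (filterI entV (filterI (entourage_inv entE1)
      (entourage_inv entD'))).
    by move=> [? ?] /= [? [? ?]].
  have [i [H1 H2]] := hbn _ entF.
  have [z Zz [_ [E1zy _]]] := H2 _ Yy.
  have H1' : forall z, Z i z -> exists2 y, Y y & V (z, y).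
    by move=> z' /H1 [y' ? [? _]]; exists y'.
  have [w Zw fwz] := surjZ i H1' z Zz.
  have [y' Yy' [_ [_ D'y'w]]] := H1 _ Zw.
  exists y'; split => //.
  apply: (entourage_split (f w) entE (HD' _ _ D'y'w)).
  by rewrite fwz.
have [p Yp clp] := @cluster_fam _ X Y S cY (fun E w Sw => Sw.1)
  (fun E E' sE w Sw => conj Sw.1 (sE _ Sw.2)) Sne.
exists p => //; apply: ent_eq => // A entA.
have entA1 := entourage_split_ent entA.
have entA2 := entourage_split_ent entA1.
have [D2 entD2 HD2] := ucP ucf entA2.
have [w [[Yw A2wy] Dpw]] := clp _ _ entA2 (ent_nbhs p entD2).
apply: (split_ent_subset entA).
exact: (entourage_split (f w) entA1 (HD2 _ _ Dpw) A2wy).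
Qed.
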